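(* Let $R$ be the ring of integers of a number field, $\mathfrak a$ a fractional ideal of $R$, $\mathfrak p$ a nonzero prime of $R$ with completion $R_{\mathfrak p}$, uniformizer $\varpi$ and $\mathfrak aR_{\mathfrak p}=\varpi^kR_{\mathfrak p}$. Let $(V_{\mathfrak a})_{\mathfrak p}=\{ax^3+3bx^2y+3cxy^2+dy^3: a\in\varpi^kR_{\mathfrak p},b\in R_{\mathfrak p},c\in\varpi^{-k}R_{\mathfrak p},d\in\varpi^{-2k}R_{\mathfrak p}\}$ with Haar measure $\mu$ normalized to give it volume $1$, and let $\mathcal P_{\mathfrak p}\subset(V_{\mathfrak a})_{\mathfrak p}$ be the set of forms for which $b^2-ac$, $\varpi^k(ad-bc)$, $\varpi^{2k}(c^2-bd)$ do not all lie in $\mathfrak pR_{\mathfrak p}$. Then $\mu(\mathcal P_{\mathfrak p})=1-N(\mathfrak p)^{-2}$.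
   Context: $N(\mathfrak p)=\#R/\mathfrak p$. $\mathcal P_{\mathfrak p}$ is the $\mathfrak p$-adic closure of the set of projective forms in $V_{\mathfrak a}$, where $f=ax^3+3bx^2y+3cxy^2+dy^3\in V_{\mathfrak a}$ is projective if no prime divides all of $(b^2-ac)R,(ad-bc)\mathfrak a,(c^2-bd)\mathfrak a^2$. *)

(* Defs.v *)
From HB Require Import structures.
From mathcomp Require Import all_boot all_order all_algebra.
From mathcomp Require Import all_classical all_reals all_analysis.
Set Implicit Arguments. Unset Strict Implicit. Unset Printing Implicit Defensive.
Import Order.TTheory GRing.Theory Num.Theory.
Local Open Scope classical_set_scope.
Local Open Scope ring_scope.

(* A binary cubic form a x^3 + 3 b x^2 y + 3 c x y^2 + d y^3 over K is
   identified with its coefficient quadruple ((a, b), c), d. *)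
Definition form4 (K : fieldType) : Type := (K * K * K * K)%type.
HB.instance Definition _ (K : fieldType) := Choice.on (form4 K).
HB.instance Definition _ (K : fieldType) :=
  isPointed.Build (form4 K) ((0, 0, 0, 0) : K * K * K * K).

Definition fa {K : fieldType} (f : form4 K) : K := f.1.1.1.
Definition fb {K : fieldType} (f : form4 K) : K := f.1.1.2.
Definition fc {K : fieldType} (f : form4 K) : K := f.1.2.
Definition fd {K : fieldType} (f : form4 K) : K := f.2.

Definition fadd {K : fieldType} (f g : form4 K) : form4 K :=
  (fa f + fa g, fb f + fb g, fc f + fc g, fd f + fd g).
Definition fscale {K : fieldType} (t : K) (f : form4 K) : form4 K :=
  (t * fa f, t * fb f, t * fc f, t * fd f).

Definition in_scaled {K : fieldType} (O : {pred K}) (w : K) (k : int) (x : K) : Prop :=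
  exists2 o, o \in O & x = w ^ k * o.

Definition Vloc {K : fieldType} (O : {pred K}) (w : K) (k : int) : set (form4 K) :=
  [set f | [/\ in_scaled O w k (fa f), in_scaled O w 0 (fb f),
              in_scaled O w (- k) (fc f) & in_scaled O w (- (2 * k)) (fd f)]].

Definition in_maxideal {K : fieldType} (O : {pred K}) (w : K) (x : K) : Prop :=
  in_scaled O w 1 x.

Definition Ploc {K : fieldType} (O : {pred K}) (w : K) (k : int) : set (form4 K) :=
  [set f | Vloc O w k f /\
     ~ [/\ in_maxideal O w (fb f ^+ 2 - fa f * fc f),
           in_maxideal O w (w ^ k * (fa f * fd f - fb f * fc f)) &
           in_maxideal O w (w ^ (2 * k) * (fc f ^+ 2 - fb f * fd f))]].

(* generators of the (Borel) sigma-algebra: the cosets x + w^n (V_a)_p *)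
Definition ball_cosets {K : fieldType} (O : {pred K}) (w : K) (k : int)
  : set (set (form4 K)) :=
  [set A | exists (x : form4 K) (n : nat),
     A = [set fadd x (fscale (w ^+ n) y) | y in Vloc O w k]].

Definition local_ring_with_uniformizer {K : fieldType} (O : {pred K}) (w : K) : Prop :=
  [/\ 1 \in O, (forall x y, x \in O -> y \in O -> x - y \in O),
      (forall x y, x \in O -> y \in O -> x * y \in O),
      w \in O /\ w != 0 &
      (forall x, x \in O -> ~ in_maxideal O w x -> x^-1 \in O)].

(* N(p) = q : r enumerates a system of representatives of O / w O *)
Definition residue_card {K : fieldType} (O : {pred K}) (w : K) (q : nat) : Prop :=
  exists r : 'I_q -> K,
    (forall i, r i \in O) /\
    (forall x, x \in O -> exists! i, in_maxideal O w (x - r i)).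

(* Main.v *)
Require Import Defs.
From HB Require Import structures.
From mathcomp Require Import all_boot all_order all_algebra.
From mathcomp Require Import all_classical all_reals all_analysis.
From mathcomp Require Import ring.
Import Order.TTheory GRing.Theory Num.Theory.
Local Open Scope classical_set_scope.
Local Open Scope ring_scope.

Section Alg.
Variables (K : fieldType) (O : {pred K}) (w : K).
Hypothesis hO : local_ring_with_uniformizer O w.

Local Notation M := (in_maxideal O w).

Lemma O1 : 1 \in O. Proof. by case: hO. Qed.
Lemma OB x y : x \in O -> y \in O -> x - y \in O. Proof. by case: hO => _ h _ _ _; apply: h. Qed.
Lemma OM x y : x \in O -> y \in O -> x * y \in O. Proof. by case: hO => _ _ h _ _; apply: h. Qed.
Lemma Ow : w \in O. Proof. by case: hO => _ _ _ [] . Qed.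
Lemma w0 : w != 0. Proof. by case: hO => _ _ _ [] . Qed.
Lemma Oinv x : x \in O -> ~ M x -> x^-1 \in O. Proof. by case: hO => _ _ _ _ h; apply: h. Qed.
Lemma O0 : 0 \in O. Proof. by rewrite -(subrr 1) OB ?O1. Qed.
Lemma ON x : x \in O -> - x \in O. Proof. by move=> h; rewrite -sub0r OB ?O0. Qed.
Lemma OD x y : x \in O -> y \in O -> x + y \in O.
Proof. by move=> hx hy; rewrite -(opprK y) OB ?ON. Qed.

Lemma OX x n : x \in O -> x ^+ n \in O.
Proof. by move=> hx; elim: n => [|n IH]; rewrite ?expr0 ?O1 // exprS OM. Qed.

Lemma ME x : M x <-> exists2 o, o \in O & x = w * o.
Proof. by rewrite /in_maxideal /in_scaled expr1z. Qed.

Lemma M_O x : M x -> x \in O.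
Proof. by case/ME => o ho ->; rewrite OM ?Ow. Qed.
Lemma M0 : M 0.
Proof. by apply/ME; exists 0; rewrite ?mulr0 ?O0. Qed.
Lemma MB x y : M x -> M y -> M (x - y).
Proof. by case/ME=> a ha -> /ME [b hb ->]; apply/ME; exists (a - b); rewrite ?OB ?mulrBr. Qed.
Lemma MN x : M x -> M (- x).
Proof. by move=> h; rewrite -sub0r; apply: MB => //; apply: M0. Qed.
Lemma MD x y : M x -> M y -> M (x + y).
Proof. by move=> hx hy; rewrite -(opprK y); apply: MB => //; apply: MN. Qed.
Lemma MMr x y : M x -> y \in O -> M (x * y).
Proof. by case/ME=> a ha -> hy; apply/ME; exists (a * y); rewrite ?OM ?mulrA. Qed.
Lemma MMl x y : y \in O -> M x -> M (y * x).
Proof. by move=> hy hx; rewrite mulrC; apply: MMr. Qed.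
Lemma Mw0 x : ~ M x -> x != 0.
Proof. by move=> h; apply/eqP => e; apply: h; rewrite e; apply: M0. Qed.
Lemma Mprime x y : x \in O -> y \in O -> M (x * y) -> ~ M x -> M y.
Proof.
move=> hx hy hxy nx; have x0 : x != 0 by apply: Mw0.
have -> : y = x^-1 * (x * y) by rewrite mulrA mulVf ?mul1r.
by apply: MMl => //; apply: Oinv.
Qed.
Lemma Msq x : x \in O -> M (x ^+ 2) -> M x.
Proof. move=> hx h; case: (pselect (M x)) => // nx; by apply: (@Mprime x x hx hx _ nx); rewrite -expr2. Qed.
Lemma Odiv x y : y \in O -> x \in O -> ~ M x -> y / x \in O.
Proof. by move=> hy hx nx; rewrite OM // Oinv. Qed.

Variables (q : nat) (r : 'I_q -> K) (i0 : 'I_q).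
Hypothesis hrO : forall i, r i \in O.
Hypothesis hr : forall x, x \in O -> exists! i, M (x - r i).

Definition idx (x : K) : 'I_q := xget i0 [set i | M (x - r i)].

Lemma idxP x : x \in O -> M (x - r (idx x)).
Proof. by move=> hx; case: (hr _ hx) => i [hi _]; exact: (@xgetI _ i0 [set i | M (x - r i)] i hi). Qed.

Lemma idx_uniq x i : x \in O -> M (x - r i) -> idx x = i.
Proof.
move=> hx hi; case: (hr _ hx) => j [_ hj].
by rewrite -(hj i hi) -(hj _ (idxP _ hx)).
Qed.

Definition z := idx 0.
Lemma Mz : M (r z).
Proof. rewrite -[r z]opprK; apply: MN => //; rewrite -sub0r; apply: idxP; exact: O0. Qed.
Lemma z_iff a : M (r a) -> a = z.
Proof. move=> h; symmetry; apply: idx_uniq; first exact: O0. by rewrite sub0r; apply: MN. Qed.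

Definition T4 := ('I_q * 'I_q * 'I_q * 'I_q)%type.
Definition bad (i : T4) : Prop :=
  let: (a, b, c, d) := i in
  [/\ M (r b ^+ 2 - r a * r c), M (r a * r d - r b * r c) & M (r c ^+ 2 - r b * r d)].

Lemma bad_det a b c d : bad (a, b, c, d) -> ~ M (r a) ->
  c = idx (r b ^+ 2 / r a) /\ d = idx (r b ^+ 3 / r a ^+ 2).
Proof.
move=> [h1 h2 h3] na; have a0 : r a != 0 by apply: Mw0.
have ia : (r a)^-1 \in O by apply: Oinv.
have Ob2 : r b ^+ 2 / r a \in O by rewrite OM // OX.
have hc : M (r b ^+ 2 / r a - r c).
  have -> : r b ^+ 2 / r a - r c = (r b ^+ 2 - r a * r c) * (r a)^-1 by field.
  by apply: MMr.
split; first by symmetry; apply: idx_uniq.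
symmetry; apply: idx_uniq; first by rewrite !OM // ?OX // -exprVn OX.
have -> : r b ^+ 3 / r a ^+ 2 - r d =
   (r b / r a) * (r b ^+ 2 / r a - r c) - (r a)^-1 * (r a * r d - r b * r c) by field.
by apply: MB => //; apply: MMl => //; rewrite OM.
Qed.

Lemma bad_zero a b c d : bad (a, b, c, d) -> M (r a) -> [/\ a = z, b = z & c = z].
Proof.
move=> [h1 h2 h3] Ma.
have Mb : M (r b).
  apply: Msq => //; have -> : r b ^+ 2 = (r b ^+ 2 - r a * r c) + r a * r c by rewrite subrK.
  by apply: MD => //; apply: MMr.
have Mc : M (r c).
  apply: Msq => //; have -> : r c ^+ 2 = (r c ^+ 2 - r b * r d) + r b * r d by rewrite subrK.
  by apply: MD => //; apply: MMr.
by split; apply: z_iff.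
Qed.

Lemma bad_build a x : ~ M (r a) ->
  bad (a, x, idx (r x ^+ 2 / r a), idx (r x ^+ 3 / r a ^+ 2)).
Proof.
move=> na; have a0 : r a != 0 by apply: Mw0.
have ia : (r a)^-1 \in O by apply: Oinv.
set s := r x ^+ 2 / r a; set t := r x ^+ 3 / r a ^+ 2.
have Os : s \in O by rewrite OM // OX.
have Ot : t \in O by rewrite !OM // ?OX // -exprVn OX.
have hc := idxP _ Os; have hd := idxP _ Ot.
set c := idx s in hc *; set d := idx t in hd *.
split.
- have -> : r x ^+ 2 - r a * r c = r a * (s - r c) by rewrite /s; field.
  by apply: MMl.
- have -> : r a * r d - r x * r c = - (r a * (t - r d)) + r x * (s - r c)
    by rewrite /s /t; field.
  by apply: MD; [apply: MN; apply: MMl | apply: MMl].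
- have -> : r c ^+ 2 - r x * r d = - ((s - r c) * (r c + s)) + r x * (t - r d)
    by rewrite /s /t; field.
  by apply: MD; [apply: MN; apply: MMr => //; apply: OD | apply: MMl].
Qed.

Lemma bad_build0 x : bad (z, z, z, x).
Proof.
split.
- by rewrite expr2 subrr; apply: M0.
- by rewrite -mulrBr; apply: MMr; [apply: Mz | apply: OB].
- by rewrite expr2 -mulrBr; apply: MMr; [apply: Mz | apply: OB].
Qed.

Definition g (i : T4) : 'I_q * 'I_q :=
  let: (a, b, c, d) := i in (a, if a == z then d else b).

Lemma card_bad : #|[set i : T4 | `[< bad i >]]%SET| = (q * q)%N.
Proof.
rewrite -(@card_in_imset _ _ g).
  have -> : (g @: [set i : T4 | `[< bad i >]])%SET = [set: 'I_q * 'I_q]%SET.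
    apply/setP => -[a x]; rewrite inE; apply/imsetP.
    case: (a =P z) => [->|na].
      exists (z, z, z, x); last by rewrite /= eqxx.
      by rewrite inE; apply/asboolP; apply: bad_build0.
    have nMa : ~ M (r a) by move=> /z_iff.
    exists (a, x, idx (r x ^+ 2 / r a), idx (r x ^+ 3 / r a ^+ 2)).
      by rewrite inE; apply/asboolP; apply: bad_build.
    by rewrite /=; case: eqP.
  by rewrite cardsT card_prod card_ord.
move=> [[[a b] c] d] [[[a' b'] c'] d']; rewrite !inE => B1 B2 /= [ea].
subst a'.
case: (pselect (M (r a))) => Ma.
  rewrite (z_iff _ Ma) eqxx => ed; subst d'.
  have [_ -> ->] := bad_zero _ _ _ _ B1 Ma; have [_ -> ->] := bad_zero _ _ _ _ B2 Ma.
  by [].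
have -> : (a == z) = false by apply/eqP => e; apply: Ma; rewrite e; apply: Mz.
move=> eb; subst b'.
have [-> ->] := bad_det _ _ _ _ B1 Ma; have [-> ->] := bad_det _ _ _ _ B2 Ma.
by [].
Qed.
Variable k : int.

Definition u := w ^ k.
Lemma u0 : u != 0. Proof. exact: expfz_neq0 w0. Qed.
Lemma w2k : w ^ (2 * k) = u ^+ 2.
Proof. by rewrite mulrC -exprz_exp. Qed.

Definition na (f : form4 K) := u^-1 * fa f.
Definition nb (f : form4 K) := fb f.
Definition nc (f : form4 K) := u * fc f.
Definition nd (f : form4 K) := u ^+ 2 * fd f.

Lemma sc_iff e x : in_scaled O w e x <-> (w ^ e)^-1 * x \in O.
Proof.
have we : w ^ e != 0 by apply: expfz_neq0; apply: w0.
split; first by case=> o ho ->; rewrite mulrA mulVf ?mul1r.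
by move=> h; exists ((w ^ e)^-1 * x) => //; rewrite mulrA mulfV ?mul1r.
Qed.

Lemma V_iff f : Vloc O w k f <->
  [/\ na f \in O, nb f \in O, nc f \in O & nd f \in O].
Proof.
rewrite /Vloc /na /nb /nc /nd /u; split.
  case=> /sc_iff h1 /sc_iff h2 /sc_iff h3 /sc_iff h4; split;
  [move: h1|move: h2|move: h3|move: h4];
  rewrite ?expr0z ?invr1 ?mul1r ?invr_expz ?opprK ?w2k //.
case=> h1 h2 h3 h4; constructor; apply/sc_iff;
  rewrite ?expr0z ?invr1 ?mul1r ?invr_expz ?opprK ?w2k //.
by rewrite -invr_expz.
Qed.


Lemma coset (x : form4 K) : Vloc O w k x ->
  [set fadd x (fscale (w ^+ 1) y) | y in Vloc O w k] =
  [set f | Vloc O w k f /\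
     [/\ M (na f - na x), M (nb f - nb x), M (nc f - nc x) & M (nd f - nd x)]].
Proof.
have U0 := u0; have W0 := w0.
move=> /V_iff [xa xb xc xd]; apply/seteqP; split.
  move=> _ [y /V_iff [ya yb yc yd] <-].
  have ea : na (fadd x (fscale (w ^+ 1) y)) - na x = w * na y.
    by rewrite /na /fadd /fscale /fa /= expr1; field.
  have eb : nb (fadd x (fscale (w ^+ 1) y)) - nb x = w * nb y.
    by rewrite /nb /fadd /fscale /fb /= expr1; ring.
  have ec : nc (fadd x (fscale (w ^+ 1) y)) - nc x = w * nc y.
    by rewrite /nc /fadd /fscale /fc /= expr1; ring.
  have ed : nd (fadd x (fscale (w ^+ 1) y)) - nd x = w * nd y.
    by rewrite /nd /fadd /fscale /fd /= expr1; ring.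
  have Mw t : t \in O -> M (w * t) by move=> ht; apply/ME; exists t.
  rewrite /=; rewrite ea eb ec ed; split; last by split; apply: Mw.
  apply/V_iff; split.
  - by rewrite -(subrK (na x) (na _)) ea OD // OM // Ow.
  - by rewrite -(subrK (nb x) (nb _)) eb OD // OM // Ow.
  - by rewrite -(subrK (nc x) (nc _)) ec OD // OM // Ow.
  - by rewrite -(subrK (nd x) (nd _)) ed OD // OM // Ow.
move=> f [hf [/ME [oa ha ea] /ME [ob hb eb] /ME [oc hc ec] /ME [od hd ed]]].
exists (u * oa, ob, u^-1 * oc, (u ^+ 2)^-1 * od).
  apply/V_iff; rewrite /na /nb /nc /nd /fa /fb /fc /fd /=; split.
  - by rewrite mulrA mulVf ?mul1r.
  - by [].
  - by rewrite mulrA mulfV ?mul1r.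
  - by rewrite mulrA mulfV ?mul1r // expf_neq0.
move: ea eb ec ed; rewrite /na /nb /nc /nd /fadd /fscale /fa /fb /fc /fd expr1.
case: f {hf} => [[[a b] c] d]; case: x {xa xb xc xd} => [[[a' b'] c'] d'] /= ea eb ec ed.
have ea' : a = a' + w * (u * oa).
  have : a - a' = u * (w * oa) by rewrite -ea; field.
  by move/eqP; rewrite subr_eq => /eqP ->; ring.
have ec' : c = c' + w * (u^-1 * oc).
  have : c - c' = u^-1 * (w * oc) by rewrite -ec; field.
  by move/eqP; rewrite subr_eq => /eqP ->; ring.
have ed' : d = d' + w * ((u ^+ 2)^-1 * od).
  have : d - d' = (u ^+ 2)^-1 * (w * od) by rewrite -ed; field.
  by move/eqP; rewrite subr_eq => /eqP ->; ring.
have eb' : b = b' + w * ob by rewrite -eb addrC subrK.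
by rewrite -ea' -eb' -ec' -ed'.
Qed.

Definition xi (i : T4) : form4 K :=
  (u * r i.1.1.1, r i.1.1.2, u^-1 * r i.1.2, (u ^+ 2)^-1 * r i.2).

Definition Cs (i : T4) : set (form4 K) :=
  [set fadd (xi i) (fscale (w ^+ 1) y) | y in Vloc O w k].

Lemma xi_n i : [/\ na (xi i) = r i.1.1.1, nb (xi i) = r i.1.1.2,
   nc (xi i) = r i.1.2 & nd (xi i) = r i.2].
Proof.
have U0 := u0.
rewrite /na /nb /nc /nd /xi /fa /fb /fc /fd /=.
by split => //; field; rewrite ?expf_neq0.
Qed.

Lemma xiV i : Vloc O w k (xi i).
Proof. by apply/V_iff; have [-> -> -> ->] := xi_n i. Qed.

Lemma Cs_iff i f : Cs i f <-> Vloc O w k f /\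
  [/\ M (na f - r i.1.1.1), M (nb f - r i.1.1.2), M (nc f - r i.1.2) & M (nd f - r i.2)].
Proof.
rewrite /Cs (coset _ (xiV i)) /=.
by have [-> -> -> ->] := xi_n i.
Qed.

Lemma uniq_res {x a b} : x \in O -> M (x - r a) -> M (x - r b) -> a = b.
Proof. by move=> hx ha hb; case: (hr _ hx) => t [_ ht]; rewrite -(ht _ ha) -(ht _ hb). Qed.

Lemma Cs_disj i j f : Cs i f -> Cs j f -> i = j.
Proof.
case: i => [[[a b] c] d]; case: j => [[[a' b'] c'] d'].
move=> /Cs_iff [/V_iff [h1 h2 h3 h4] /= [e1 e2 e3 e4]] /Cs_iff [_ /= [f1 f2 f3 f4]].
by rewrite (uniq_res h1 e1 f1) (uniq_res h2 e2 f2) (uniq_res h3 e3 f3) (uniq_res h4 e4 f4).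
Qed.

Lemma Cs_cover f : Vloc O w k f -> exists i, Cs i f.
Proof.
move=> hf; have /V_iff [h1 h2 h3 h4] := hf.
exists (idx (na f), idx (nb f), idx (nc f), idx (nd f)).
by apply/Cs_iff; split => //=; split; apply: idxP.
Qed.

Lemma Mlin x x' y y' : x' \in O -> y \in O -> M (x - x') -> M (y - y') -> M (x * y - x' * y').
Proof.
move=> hx' hy hx hyy.
have -> : x * y - x' * y' = (x - x') * y + x' * (y - y') by ring.
by apply: MD; [apply: MMr | apply: MMl].
Qed.

Lemma Mcong {x y} : M (x - y) -> M y -> M x.
Proof. by move=> h hy; rewrite -(subrK y x); apply: MD. Qed.

Lemma Cs_bad i f : Cs i f -> (bad i <->
  [/\ M (fb f ^+ 2 - fa f * fc f), M (w ^ k * (fa f * fd f - fb f * fc f))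
    & M (w ^ (2 * k) * (fc f ^+ 2 - fb f * fd f))]).
Proof.
have U0 := u0.
case: i => [[[a b] c] d] /Cs_iff [/V_iff [h1 h2 h3 h4] /= [e1 e2 e3 e4]].
have E1 : fb f ^+ 2 - fa f * fc f = nb f * nb f - na f * nc f.
  by rewrite /na /nb /nc; field.
have E2 : w ^ k * (fa f * fd f - fb f * fc f) = na f * nd f - nb f * nc f.
  by rewrite /na /nb /nc /nd /u; field.
have E3 : w ^ (2 * k) * (fc f ^+ 2 - fb f * fd f) = nc f * nc f - nb f * nd f.
  by rewrite w2k /na /nb /nc /nd; field.
rewrite E1 E2 E3 /bad !expr2.
have D1 : M ((nb f * nb f - na f * nc f) - (r b * r b - r a * r c)).
  have -> : (nb f * nb f - na f * nc f) - (r b * r b - r a * r c) =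
    (nb f * nb f - r b * r b) - (na f * nc f - r a * r c) by ring.
  by apply: MB; apply: Mlin.
have D2 : M ((na f * nd f - nb f * nc f) - (r a * r d - r b * r c)).
  have -> : (na f * nd f - nb f * nc f) - (r a * r d - r b * r c) =
    (na f * nd f - r a * r d) - (nb f * nc f - r b * r c) by ring.
  by apply: MB; apply: Mlin.
have D3 : M ((nc f * nc f - nb f * nd f) - (r c * r c - r b * r d)).
  have -> : (nc f * nc f - nb f * nd f) - (r c * r c - r b * r d) =
    (nc f * nc f - r c * r c) - (nb f * nd f - r b * r d) by ring.
  by apply: MB; apply: Mlin.
split; case=> g1 g2 g3; split.
- by apply: Mcong D1 g1.
- by apply: Mcong D2 g2.
- by apply: Mcong D3 g3.
- by apply: Mcong g1; rewrite -opprB; apply: MN.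
- by apply: Mcong g2; rewrite -opprB; apply: MN.
- by apply: Mcong g3; rewrite -opprB; apply: MN.
Qed.

Lemma main_aux (R : realType)
  (mu : {measure set (g_sigma_algebraType (ball_cosets O w k)) -> \bar R})
  (hmuV : mu (Vloc O w k) = 1%E)
  (hinv : forall (A : set (g_sigma_algebraType (ball_cosets O w k))),
     measurable A -> A `<=` Vloc O w k ->
     forall x, Vloc O w k x -> mu [set fadd x y | y in A] = mu A) :
  mu (Ploc O w k) = (1 - (q%:R ^+ 2)^-1)%:E.
Proof.
set G := ball_cosets O w k.
pose z4 : form4 K := (0, 0, 0, 0).
have Vz : Vloc O w k z4.
  by apply/V_iff; rewrite /na /nb /nc /nd /fa /fb /fc /fd /= !mulr0; split; exact: O0.
pose W := [set fadd z4 (fscale (w ^+ 1) y) | y in Vloc O w k].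
have mW : measurable (W : set (g_sigma_algebraType G)).
  by apply: sub_sigma_algebra; exists z4, 1%N.
have mV : measurable (Vloc O w k : set (g_sigma_algebraType G)).
  apply: sub_sigma_algebra; exists z4, 0%N.
  apply/seteqP; split => f.
    by move=> hf; exists f => //; case: f {hf} => [[[a b] c] d];
      rewrite /fadd /fscale /fa /fb /fc /fd /= expr0 !mul1r !add0r.
  by case=> y hy <-; case: y hy => [[[a b] c] d] hy;
      rewrite /fadd /fscale /fa /fb /fc /fd /= expr0 !mul1r !add0r.
have WV : W `<=` Vloc O w k by rewrite /W (coset _ Vz) => f [].
have mC i : measurable (Cs i : set (g_sigma_algebraType G)).
  by apply: sub_sigma_algebra; exists (xi i), 1%N.
have hCW i : mu (Cs i) = mu W.
  rewrite -(hinv W mW WV (xi i) (xiV i)); congr (mu _).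
  apply/seteqP; split => f.
  - case=> y Vy <-; exists (fadd z4 (fscale (w ^+ 1) y)); first by exists y.
    by rewrite /fadd /z4 /fa /fb /fc /fd /= !add0r.
  - case=> _ [y Vy <-] <-; exists y => //.
    by rewrite /fadd /z4 /fa /fb /fc /fd /= !add0r.
have addC (P : {pred T4}) :
    mu (\big[setU/set0]_(i in P) Cs i) = (\sum_(i in P) mu (Cs i))%E.
  rewrite big_enum_val [RHS]big_enum_val.
  rewrite (@measure_bigsetU_ord_cond _ _ _ _ _ xpredT) //.
  move=> i j _ _ [f [h1 h2]]; apply: enum_val_inj; exact: Cs_disj _ _ _ h1 h2.
have memB (P : {pred T4}) f :
    (\big[setU/set0]_(i in P) Cs i) f <-> exists2 i, i \in P & Cs i f.
  rewrite -bigcup_pred; split; first by case=> i hi hf; exists i.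
  by case=> i hi hf; exists i.
pose A := [set i : T4 | `[< bad i >]]%SET.
have hV : Vloc O w k = \big[setU/set0]_(i in (predT : {pred T4})) Cs i.
  apply/seteqP; split => f.
    by move=> /Cs_cover [i hi]; apply/memB; exists i.
  by move/memB => [i _ /Cs_iff []].
have hP : Ploc O w k = \big[setU/set0]_(i in ~: A) Cs i.
  apply/seteqP; split => f.
    case=> Vf nb; have [i hi] := Cs_cover _ Vf; apply/memB; exists i => //.
    rewrite !inE; apply/negP => /asboolP /(Cs_bad _ _ hi); exact: nb.
  move/memB => [i hi Ci]; split; first by case/Cs_iff: Ci.
  move=> h; move: hi; rewrite !inE => /negP; apply; apply/asboolP.
  exact/(Cs_bad _ _ Ci).
have m0 : (0 <= mu W)%E by apply: measure_ge0.
have m1 : (mu W <= 1)%E by rewrite -hmuV; apply: le_measure => //; rewrite inE.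
have hm : mu W = (fine (mu W))%:E.
  rewrite fineK // ge0_fin_numE //; apply: (le_lt_trans m1); exact: ltry.
set mr := fine (mu W) in hm.
have sumC (P : {pred T4}) : (\sum_(i in P) mu (Cs i) = (mr *+ #|P|)%:E)%E.
  under eq_bigr => i _ do rewrite hCW hm.
  by rewrite sumEFin sumr_const.
move: hmuV; rewrite hV addC sumC => -[h1].
rewrite hP addC sumC; congr EFin.
have hc := cardsC A.
have cb : #|A| = (q * q)%N by exact: card_bad.
rewrite cb !card_prod !card_ord in hc.
move: h1; rewrite !card_prod !card_ord.
have q0 : (q%:R : R) != 0 by rewrite pnatr_eq0 -lt0n (leq_ltn_trans (leq0n i0) (ltn_ord i0)).
have {}hc : (q%:R * q%:R + #|~: A|%:R : R) = q%:R * q%:R * q%:R * q%:R.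
  by rewrite -!natrM -natrD hc.
move=> h1.
have {}h1 : mr * (q%:R * q%:R * q%:R * q%:R) = 1 by rewrite -!natrM mulr_natr.
rewrite -[LHS]mulr_natr.
have -> : (#|~: A|%:R : R) = q%:R * q%:R * q%:R * q%:R - q%:R * q%:R.
  by rewrite -hc; ring.
have -> : mr = (q%:R * q%:R * q%:R * q%:R)^-1.
  have Q4 : (q%:R * q%:R * q%:R * q%:R : R) != 0 by rewrite !mulf_neq0.
  by apply: (mulIf Q4); rewrite h1 mulVf.
by field.
Qed.
End Alg.

Theorem mainTheorem9 (R : realType) (K : fieldType) (O : {pred K}) (w : K)
  (k : int) (q : nat)
  (hO : local_ring_with_uniformizer O w)
  (hq : residue_card O w q)
  (mu : {measure set (g_sigma_algebraType (ball_cosets O w k)) -> \bar R})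
  (hmuV : mu (Vloc O w k) = 1%E)
  (hinv : forall (A : set (g_sigma_algebraType (ball_cosets O w k))),
     measurable A -> A `<=` Vloc O w k ->
     forall x, Vloc O w k x -> mu [set fadd x y | y in A] = mu A) :
  mu (Ploc O w k) = (1 - (q%:R ^+ 2)^-1)%:E.
Proof.
case: hq => r [hrO hr].
have [i0 _] := hr 1 (@O1 K O w hO).
exact: (@main_aux K O w hO q r i0 hrO hr k R mu hmuV hinv).
Qed.
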